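(* Let $n\ge3$ and let $f$ be a $\gamma_{tr3}(P_3\square P_n)$-function such that the number of vertices $v$ with $f(v)=\emptyset$ is minimum among all $\gamma_{tr3}(P_3\square P_n)$-functions. Then $|f((2,j))|\in\{0,1\}$ for every $j\in\{0,1,\dots,n-1\}$.
   Context: $P_m$ denotes the directed path with vertex set $\{0,1,\dots,m-1\}$ and arcs $(i,i+1)$ for $0\le i\le m-2$. The Cartesian product $D_1\square D_2$ has vertex set $V(D_1)\times V(D_2)$, with an arc from $(x_1,y_1)$ to $(x_2,y_2)$ iff either $(x_1,x_2)$ is an arc of $D_1$ and $y_1=y_2$, or $x_1=x_2$ and $(y_1,y_2)$ is an arc of $D_2$. For a digraph $D$ and positive integer $k$, a $k$-rainbow dominating function on $D$ is $f:V(D)\to\mathcal P(\{1,\dots,k\})$ such that every $v$ with $f(v)=\emptyset$ satisfies $\bigcup_{u\in N^-(v)}f(u)=\{1,\dots,k\}$, where $N^-(v)$ is the set of in-neighbors of $v$; its weight is $\sum_v|f(v)|$. It is total if additionally the subdigraph induced by $\{v:f(v)\ne\emptyset\}$ has no isolated vertex (a vertex with neither in- nor out-neighbors in it). $\gamma_{trk}(D)$ is the minimum weight of a total $k$-rainbow dominating function, and a $\gamma_{trk}(D)$-function is one attaining it. *)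

(* Defs.v *)
From mathcomp Require Import all_boot.
Set Implicit Arguments. Unset Strict Implicit. Unset Printing Implicit Defensive.

Definition path_arc (m : nat) : rel 'I_m := fun i j => j == i.+1 :> nat.

Definition cart_arc (A B : finType) (a : rel A) (b : rel B) : rel (A * B) :=
  fun x y => (a x.1 y.1 && (x.2 == y.2)) || ((x.1 == y.1) && b x.2 y.2).

Definition grid_arc (m n : nat) : rel ('I_m * 'I_n) :=
  cart_arc (@path_arc m) (@path_arc n).

(* k-rainbow dominating function on a digraph (V, arc): in-neighbours u of v
   are those with arc u v. *)
Definition is_rdf (V : finType) (arc : rel V) (k : nat) (f : V -> {set 'I_k}) :=
  forall v, f v = set0 -> \bigcup_(u | arc u v) f u = [set: 'I_k].

(* total: the subdigraph induced by {v | f v <> empty} has no isolated vertex *)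
Definition is_trdf (V : finType) (arc : rel V) (k : nat) (f : V -> {set 'I_k}) :=
  is_rdf arc f /\
  forall v, f v != set0 -> exists u, (f u != set0) && (arc u v || arc v u).

Definition rweight (V : finType) (k : nat) (f : V -> {set 'I_k}) : nat :=
  \sum_(v : V) #|f v|.

Definition is_gamma_trk_fun (V : finType) (arc : rel V) (k : nat)
  (f : V -> {set 'I_k}) :=
  is_trdf arc f /\ forall g : V -> {set 'I_k}, is_trdf arc g -> rweight f <= rweight g.

Definition n_empty (V : finType) (k : nat) (f : V -> {set 'I_k}) : nat :=
  #|[set v | f v == set0]|.

(* Main.v *)
Require Import Defs.
From mathcomp Require Import all_boot.
Set Implicit Arguments. Unset Strict Implicit. Unset Printing Implicit Defensive.

Section Gen.
Variables (V : finType) (arc : rel V) (k : nat).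

Lemma shrink_trdf (f : V -> {set 'I_k}) v (S : {set 'I_k}) :
  is_trdf arc f -> f v != set0 -> S != set0 ->
  (forall x, arc v x -> f x != set0) ->
  is_trdf arc (fun x => if x == v then S else f x).
Proof.
move=> [Hd Ht] fv0 S0 Hout; split.
  move=> x; cbv beta; case: (eqVneq x v) => [->|xv] E; first by move: S0; rewrite E eqxx.
  rewrite -(Hd x E); apply: eq_bigr => u Hu; case: (eqVneq u v) => // Euv.
  by move: (Hout x); rewrite -Euv Hu E eqxx => /(_ isT).
move=> x; cbv beta => Hx.
have Hf : f x != set0 by move: Hx; case: (eqVneq x v) => [->|xv].
have [u /andP[fu Hu]] := Ht x Hf.
by exists u; rewrite Hu andbT; case: (eqVneq u v).
Qed.

Lemma shrink_weight (f : V -> {set 'I_k}) v (S : {set 'I_k}) :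
  rweight (fun x => if x == v then S else f x) + #|f v| = rweight f + #|S|.
Proof.
rewrite /rweight (bigD1 v) //= [in RHS](bigD1 v) //= eqxx.
rewrite (eq_bigr (fun x => #|f x|)); last by move=> x /negbTE ->.
by rewrite addnC addnA [in RHS]addnC addnA [#|S| + _]addnC.
Qed.

Lemma transfer_trdf (f : V -> {set 'I_k}) v w (S T : {set 'I_k}) :
  is_trdf arc f -> arc v w -> f w = set0 -> (forall x, arc v x -> x = w) ->
  S != set0 -> T != set0 -> w != v ->
  is_trdf arc (fun x => if x == v then S else if x == w then T else f x).
Proof.
move=> [Hd Ht] Hvw fw0 Hout S0 T0 wv; split.
  move=> x; cbv beta; case: (eqVneq x v) => [_ E|xv]; first by move: S0; rewrite E eqxx.
  case: (eqVneq x w) => [_ E|xw E]; first by move: T0; rewrite E eqxx.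
  apply/eqP; rewrite eqEsubset subsetT /= -(Hd x E).
  apply/bigcupsP => u Hu.
  have Huv : u != v by apply/eqP => Euv; move/eqP: xw; apply; apply: Hout; rewrite -Euv.
  apply: (subset_trans _ (bigcup_sup u Hu)).
  rewrite (negbTE Huv); case: (eqVneq u w) => [->|_]; last exact: subxx.
  by rewrite fw0 sub0set.
move=> x; cbv beta => Hx.
case: (eqVneq x v) => [Exv|xv].
  by exists w; rewrite (negbTE wv) eqxx T0 Exv Hvw orbT.
move: Hx; rewrite (negbTE xv); case: (eqVneq x w) => [Exw|xw] Hx.
  by exists v; rewrite eqxx S0 Exw Hvw.
have [u /andP[fu Hu]] := Ht x Hx.
exists u; rewrite Hu andbT; case: (eqVneq u v) => // _; case: (eqVneq u w) => // Euw.
Qed.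

Lemma transfer_weight (f : V -> {set 'I_k}) v w (S T : {set 'I_k}) :
  w != v -> f w = set0 -> #|S| + #|T| = #|f v| ->
  rweight (fun x => if x == v then S else if x == w then T else f x) = rweight f.
Proof.
move=> wv fw0 HST.
rewrite /rweight (bigD1 v) //= [in RHS](bigD1 v) //= eqxx.
rewrite (bigD1 w) //= [in RHS](bigD1 w) //= eqxx (negbTE wv) fw0 cards0.
rewrite (eq_bigr (fun x => #|f x|)); last first.
  by move=> x /andP[/negbTE -> /negbTE ->].
by rewrite addnA HST add0n.
Qed.

Lemma transfer_empty (f : V -> {set 'I_k}) v w (S T : {set 'I_k}) :
  S != set0 -> T != set0 -> f w = set0 ->
  n_empty (fun x => if x == v then S else if x == w then T else f x) < n_empty f.
Proof.
move=> S0 T0 fw0; rewrite /n_empty; apply: proper_card; apply/properP; split.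
  apply/subsetP => x; rewrite !inE; case: (eqVneq x v) => _; first by rewrite (negbTE S0).
  by case: (eqVneq x w) => _ //; rewrite (negbTE T0).
exists w; first by rewrite inE fw0.
rewrite inE; case: (eqVneq w v) => _; first by rewrite S0.
by rewrite eqxx T0.
Qed.

End Gen.

Theorem lemma4p6 (n : nat) (hn : 3 <= n) (f : 'I_3 * 'I_n -> {set 'I_3}) :
  is_gamma_trk_fun (@grid_arc 3 n) f ->
  (forall g : 'I_3 * 'I_n -> {set 'I_3},
      is_gamma_trk_fun (@grid_arc 3 n) g -> n_empty f <= n_empty g) ->
  forall j : 'I_n, #|f (inord 2, j)| <= 1.
Proof.
move=> [Htr Hmin] Hemp j.
rewrite leqNgt; apply/negP => H2.
set v : 'I_3 * 'I_n := (inord 2, j).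
have v1 : (v.1 : nat) = 2 by rewrite /= inordK.
have fv0 : f v != set0 by rewrite -card_gt0 (ltn_trans _ H2).
have [a Ha] : exists a, a \in f v by apply/set0Pn.
have S0 : [set a] != set0 by apply/set0Pn; exists a; rewrite inE.
have Hout : forall x, grid_arc v x -> x.1 = v.1 /\ (x.2 : nat) = j.+1.
  move=> [x1 x2]; rewrite /grid_arc /cart_arc /path_arc /=.
  case/orP=> /andP[E1 E2].
    by move: (ltn_ord x1); rewrite (eqP E1) inordK.
  split; [by apply/eqP; rewrite eq_sym | exact/eqP].

have shrink : (forall x, grid_arc v x -> f x != set0) -> False.
  move=> Hx.
  have Hg := shrink_trdf Htr fv0 S0 Hx.
  have := Hmin _ Hg; have := shrink_weight f v [set a].
  rewrite cards1 => E Hle.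
  by move: (leq_add Hle (leqnn #|f v|)); rewrite E leq_add2l => H1; move: (leq_trans H2 H1).
case: (ltnP j.+1 n) => Hj; last first.
  apply: shrink => x /Hout [_ Ex2].
  by move: (ltn_ord x.2); rewrite Ex2 ltnNge Hj.
set w : 'I_3 * 'I_n := (v.1, Ordinal Hj).
have Hvw : grid_arc v w by rewrite /grid_arc /cart_arc /path_arc /= !eqxx orbT.
have Hout' : forall x, grid_arc v x -> x = w.
  move=> [x1 x2] /Hout [/= E1 E2]; rewrite /w E1; congr pair; exact: val_inj.
case: (eqVneq (f w) set0) => [fw0|fw0]; last first.
  by apply: shrink => x /Hout' ->.
have wv : w != v.
  apply/eqP => E; have : (w.2 : nat) = v.2 by rewrite E.
  by move=> /= /esym; apply: n_Sn.
set T := f v :\ a.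
have T0 : T != set0.
  by rewrite -card_gt0 /T (cardsD1 a) Ha add1n ltnS in H2 *.
have HST : #|[set a]| + #|T| = #|f v| by rewrite /T [in RHS](cardsD1 a) Ha cards1.
have Hg := transfer_trdf Htr Hvw fw0 Hout' S0 T0 wv.
have Hw := transfer_weight wv fw0 HST.
have Hgam : is_gamma_trk_fun (grid_arc (n:=n)) (fun x => if x == v then [set a] else if x == w then T else f x).
  by split=> // h Hh; rewrite Hw; apply: Hmin.
have := Hemp _ Hgam; rewrite leqNgt.
by rewrite (transfer_empty v S0 T0 fw0).
Qed.
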